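(* Let $q$ be a prime power, $n\ge 2$, $\lambda$ a nontrivial additive character of $\mathbb{F}_q$, and $x\in\mathbb{F}_q^*$. Then \[ \left|\sum_{\alpha_1,\ldots,\alpha_{n-1}\in\mathbb{F}_q^*}\lambda\!\left(\alpha_1+\cdots+\alpha_{n-1}+\frac{x}{\alpha_1\cdots\alpha_{n-1}}\right)\right| \le \left(1-\frac{1}{q-1}\right)q^{n/2}+\frac{1}{q-1}. \] *)

(* Defs.v *)
From mathcomp Require Import all_boot all_order all_algebra all_field.
Set Implicit Arguments. Unset Strict Implicit. Unset Printing Implicit Defensive.
Import Order.TTheory GRing.Theory Num.Theory.
Local Open Scope ring_scope.

Definition additive_character (F : finFieldType) (lam : F -> algC) : Prop :=
  (forall a b : F, lam (a + b) = lam a * lam b) /\ (forall a : F, lam a != 0).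

Definition nontrivial_character (F : finFieldType) (lam : F -> algC) : Prop :=
  exists a : F, lam a != 1.

(* Main.v *)
Require Import Defs.
From mathcomp Require Import all_boot all_order all_algebra all_field all_fingroup all_solvable all_character.
From mathcomp Require Import zify.
Set Implicit Arguments. Unset Strict Implicit. Unset Printing Implicit Defensive.
Import Order.TTheory GRing.Theory Num.Theory.
Local Open Scope ring_scope.
Section S.
Variable F : finFieldType.
Local Notation U := {unit F}.
Local Notation G := [set: {unit F}]%G.

Definition chiF (i : Iirr G) (a : F) : algC :=
  if (insub a : option U) is Some u then 'chi_i u else 0.

Lemma chiF_val i (u : U) : chiF i (val u) = 'chi_i u.
Proof. by rewrite /chiF valK. Qed.

Lemma chiF0 i : chiF i 0 = 0.
Proof. by rewrite /chiF insubF // unitfE eqxx. Qed.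

Lemma linG i : 'chi[G]_i \is a linear_char.
Proof. exact/irr_cyclic_lin/field_unit_group_cyclic. Qed.

Lemma chiFM i a b : chiF i (a * b) = chiF i a * chiF i b.
Proof.
have [->|a0] := eqVneq a 0; first by rewrite mul0r chiF0 mul0r.
have [->|b0] := eqVneq b 0; first by rewrite mulr0 chiF0 mulr0.
have ua : a \is a GRing.unit by rewrite unitfE.
have ub : b \is a GRing.unit by rewrite unitfE.
pose u : U := Sub a ua; pose v : U := Sub b ub.
have -> : a * b = val (u * v)%g by rewrite FinRing.val_unitM.
by rewrite chiF_val lin_charM ?inE // ?linG -?(chiF_val i u) -?(chiF_val i v).
Qed.

Lemma chiF1 i : chiF i 1 = 1.
Proof.
have -> : (1 : F) = val (1%g : U) by [].
by rewrite chiF_val lin_char1 // linG.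
Qed.

Lemma chiF_conj i a : a != 0 -> (chiF i a)^* = chiF i a^-1.
Proof.
move=> a0; have ua : a \is a GRing.unit by rewrite unitfE.
pose u : U := Sub a ua.
have -> : a = val u by [].
have -> : (val u)^-1 = val (u^-1)%g by rewrite FinRing.val_unitV.
by rewrite !chiF_val lin_charV_conj ?inE // linG.
Qed.

Lemma chiF_norm i a : a != 0 -> `|chiF i a| = 1.
Proof.
move=> a0; have ua : a \is a GRing.unit by rewrite unitfE.
pose u : U := Sub a ua.
have -> : a = val u by [].
by rewrite chiF_val normC_lin_char ?inE // linG.
Qed.

Lemma sumU (g : F -> algC) : \sum_(u : U) g (val u) = \sum_(a | a != 0) g a.
Proof.
rewrite (reindex_onto (fun u : U => val u) (fun a => insubd (1%g : U) a)) /=; last first.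
  by move=> a a0; rewrite insubdK // unitfE.
apply: eq_bigl => u; rewrite valKd eqxx andbT.
by rewrite -unitfE (valP u).
Qed.

Lemma card_Iirr : #|Iirr G| = #|F|.-1.
Proof. by rewrite card_Iirr_cyclic ?card_finField_unit //; exact: field_unit_group_cyclic. Qed.

Lemma chiF_ortho2 a b : b != 0 ->
  \sum_i chiF i a * (chiF i b)^* = (#|F|.-1)%:R *+ (a == b).
Proof.
move=> b0.
have [->|a0] := eqVneq a 0.
  by rewrite big1 ?(negPf (negbT _)) 1?eq_sym ?(negPf b0) // => i _; rewrite chiF0 mul0r.
have ua : a \is a GRing.unit by rewrite unitfE.
have ub : b \is a GRing.unit by rewrite unitfE.
pose u : U := Sub a ua; pose v : U := Sub b ub.
have -> : a = val u by [].
have -> : b = val v by [].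
under eq_bigr do rewrite !chiF_val.
rewrite second_orthogonality_relation ?inE //.
have cG : abelian G by exact/cyclic_abelian/field_unit_group_cyclic.
rewrite (abelian_classP _ cG) ?inE //.
have -> : ('C_G[u])%g = G.
  apply/setIidPl/subsetP => w _; apply/cent1P.
  by apply: val_inj; rewrite !FinRing.val_unitM mulrC.
by rewrite card_finField_unit val_eqE.
Qed.

Lemma chiF_ortho1 i : i != 0 -> \sum_a chiF i a = 0.
Proof.
move=> i0.
rewrite (bigD1 0) //= chiF0 add0r -sumU.
under eq_bigr do rewrite chiF_val.
have := first_orthogonality_relation i 0.
rewrite (negPf i0) irr0.
rewrite (eq_bigr (fun x => 'chi_i x)); last by move=> w _; rewrite cfun1E groupV inE mulr1.
have hG : (#|G|%:R^-1 : algC) != 0 by rewrite invr_eq0 pnatr_eq0 -lt0n cardG_gt0.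
move/eqP; rewrite mulf_eq0 (negPf hG) /= => /eqP.
by apply: etrans; apply: eq_bigl => w; rewrite inE.
Qed.

Lemma chiF_0 a : a != 0 -> chiF 0 a = 1.
Proof.
move=> a0; have ua : a \is a GRing.unit by rewrite unitfE.
pose u : U := Sub a ua.
have -> : a = val u by [].
by rewrite chiF_val irr0 cfun1E inE.
Qed.

Variable lam : F -> algC.
Hypothesis hadd : forall a b, lam (a + b) = lam a * lam b.
Hypothesis hnz : forall a, lam a != 0.
Hypothesis hnt : exists b, lam b != 1.

Lemma lam0 : lam 0 = 1.
Proof.
have h := hadd 0 0; rewrite addr0 in h.
apply: (mulfI (hnz 0)); by rewrite -h mulr1.
Qed.

Lemma lamN a : lam (- a) = (lam a)^-1.
Proof. by apply: (mulfI (hnz a)); rewrite -hadd subrr lam0 mulfV. Qed.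

Lemma lam_shift (P : F -> algC) b : \sum_a P (b + a) = \sum_a P a.
Proof. by rewrite [RHS](reindex_inj (addrI b)). Qed.

Lemma sum_lam : \sum_a lam a = 0.
Proof.
have [b hb] := hnt.
have : \sum_a lam a = lam b * \sum_a lam a.
  by rewrite -{1}(lam_shift lam b) mulr_sumr; apply: eq_bigr => a _; rewrite hadd.
move/eqP; rewrite -subr_eq0 -{1}(mul1r (\sum_a lam a)) -mulrBl mulf_eq0.
by rewrite subr_eq0 eq_sym (negPf hb) => /eqP.
Qed.

Lemma lam_pow b : lam b ^+ #|F| = 1.
Proof.
have hP : \prod_a lam a != 0 by rewrite prodf_seq_neq0; apply/allP => a _; exact: hnz.
apply: (mulIf hP); rewrite mul1r.
rewrite {2}(reindex_inj (addrI b)) /=.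
rewrite [RHS](eq_bigr (fun a => lam b * lam a)); last by move=> a _; rewrite hadd.
by rewrite big_split /= prodr_const.
Qed.

Lemma lam_norm b : `|lam b| = 1.
Proof.
apply/eqP; rewrite -(@pexpr_eq1 _ _ #|F|) ?normr_ge0 //.
  by rewrite -normrX lam_pow normr1.
by apply/card_gt0P; exists 0.
Qed.

Lemma lam_conj b : (lam b)^* = lam (- b).
Proof. by rewrite lamN invC_norm lam_norm expr1n invr1 mul1r. Qed.

Lemma sum_lam_mul c : \sum_b lam (c * b) = (c == 0)%:R * #|F|%:R.
Proof.
have [->|c0] := eqVneq c 0.
  under eq_bigr do rewrite mul0r lam0.
  by rewrite sumr_const mul1r.
rewrite mul0r (reindex_inj (mulfI (invr_neq0 c0))) /=.
by under eq_bigr do rewrite mulrA mulfV // mul1r; rewrite sum_lam.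
Qed.

Definition gs i := \sum_a chiF i a * lam a.

Lemma gs0 : gs 0 = -1.
Proof.
have := sum_lam; rewrite (bigD1 0) //= lam0 => /eqP; rewrite addrC addr_eq0 => /eqP <-.
rewrite /gs (bigD1 0) //= chiF0 mul0r add0r.
by apply: eq_bigr => a a0; rewrite chiF_0 ?mul1r.
Qed.

Lemma gs_norm2 i : i != 0 -> gs i * (gs i)^* = #|F|%:R.
Proof.
move=> i0.
rewrite {2}/gs rmorph_sum mulr_sumr (bigD1 0) //= chiF0 mul0r rmorph0 mulr0 add0r.
have step b : b != 0 ->
    gs i * (chiF i b * lam b)^* = \sum_t chiF i t * lam ((t - 1) * b).
  move=> b0; have hc : (chiF i b * lam b)^* = (chiF i b)^* * (lam b)^* by rewrite rmorphM.
  rewrite hc chiF_conj // lam_conj /gs mulr_suml.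
  rewrite (reindex_inj (mulIf b0)) /=; apply: eq_bigr => t _.
  rewrite mulrACA -chiFM -hadd mulfK // mulrBl mul1r.
  by [].
rewrite (eq_bigr _ step) exchange_big /=.
have inner t : \sum_(b | b != 0) lam ((t - 1) * b) = (t == 1)%:R * #|F|%:R - 1.
  have := sum_lam_mul (t - 1); rewrite (bigD1 0) //= mulr0 lam0 subr_eq0 => <-.
  by rewrite addrAC subrr add0r.
under eq_bigr do rewrite -mulr_sumr inner.
under eq_bigr do rewrite mulrBr mulr1.
rewrite sumrB chiF_ortho1 // subr0 (bigD1 1) //= eqxx mul1r chiF1 mul1r big1 ?addr0 //.
by move=> t /negPf ->; rewrite mul0r mulr0.
Qed.


Lemma chiF_prod i (I : finType) (f : I -> F) : chiF i (\prod_k f k) = \prod_k chiF i (f k).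
Proof. exact: (big_morph _ (chiFM i) (chiF1 i)). Qed.

Lemma lam_sum (I : finType) (f : I -> F) : lam (\sum_k f k) = \prod_k lam (f k).
Proof. exact: (big_morph _ hadd lam0). Qed.

Lemma bij (m : nat) x : x != 0 ->
  \sum_(f : {ffun 'I_m.+2 -> F} | \prod_k f k == x) lam (\sum_k f k) =
  \sum_(a : {ffun 'I_m.+1 -> F} | [forall i, a i != 0]) lam (\sum_i a i + x / \prod_i a i).
Proof.
move=> x0.
pose h (a : {ffun 'I_m.+1 -> F}) : {ffun 'I_m.+2 -> F} :=
  [ffun j : 'I_m.+2 => if (j < m.+1)%N then a (inord j) else x / \prod_i a i].
pose h' (f : {ffun 'I_m.+2 -> F}) : {ffun 'I_m.+1 -> F} :=
  [ffun i : 'I_m.+1 => f (widen_ord (leqnSn _) i)].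
have hw a i : h a (widen_ord (leqnSn _) i) = a i.
  by rewrite ffunE /= ltn_ord inord_val.
have hm a : h a ord_max = x / \prod_i a i by rewrite ffunE /= ltnn.
have hh' a : h' (h a) = a by apply/ffunP => i; rewrite ffunE hw.
rewrite (reindex_onto h h'); last first.
  move=> f /eqP hf; apply/ffunP => j; rewrite ffunE.
  case: ifP => hj.
    by rewrite ffunE; congr (f _); apply: val_inj; rewrite /= inordK.
  have -> : j = ord_max by apply: val_inj => /=; move: (ltn_ord j) hj; rewrite ltnS; lia.
  have hpe : \prod_(i < m.+1) f (widen_ord (leqnSn _) i) = \prod_i (h' f) i.
    by apply: eq_bigr => i _; rewrite ffunE.
  have hp : \prod_i (h' f) i != 0.
    apply: contraNneq x0 => hp; rewrite -hf big_ord_recr /=.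
    by rewrite hpe hp mul0r.
  rewrite -hf big_ord_recr /= hpe.
  by rewrite mulrC mulrA mulVf // mul1r.
apply: eq_big => a.
  rewrite hh' eqxx andbT big_ord_recr /= hm.
  have -> : \prod_(i < m.+1) h a (widen_ord (leqnSn _) i) = \prod_i a i.
    by apply: eq_bigr => i _; rewrite hw.
  have [hp|hp] := eqVneq (\prod_i a i) 0.
    rewrite hp mul0r eq_sym (negPf x0); apply/esym/negbTE.
    move/eqP/prodf_eq0: hp => [i _ ai].
    by apply/forallP => /(_ i); rewrite ai.
  rewrite mulrC mulfVK // eqxx; apply/esym/forallP => i.
  by apply: contraNneq hp => ai; rewrite (bigD1 i) //= ai mul0r.
move=> _; rewrite big_ord_recr /= hm.
by congr (lam (_ + _)); apply: eq_bigr => i _; rewrite hw.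
Qed.

Lemma kl_ident (m : nat) x : x != 0 ->
  (#|F|.-1)%:R * \sum_(a : {ffun 'I_m.+1 -> F} | [forall i, a i != 0])
      lam (\sum_i a i + x / \prod_i a i)
  = \sum_i gs i ^+ m.+2 * (chiF i x)^*.
Proof.
move=> x0; rewrite -bij //.
have e i : gs i ^+ m.+2 = \sum_(f : {ffun 'I_m.+2 -> F}) chiF i (\prod_k f k) * lam (\sum_k f k).
  have -> : gs i ^+ m.+2 = \prod_(k < m.+2) gs i by rewrite prodr_const card_ord.
  rewrite /gs bigA_distr_bigA.
  by apply: eq_bigr => f _; rewrite big_split chiF_prod lam_sum.
symmetry; transitivity (\sum_i \sum_(f : {ffun 'I_m.+2 -> F}) chiF i (\prod_k f k) * lam (\sum_k f k) * (chiF i x)^*).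
  by apply: eq_bigr => i _; rewrite e mulr_suml.
symmetry.
rewrite exchange_big /= mulr_sumr big_mkcond /=.
apply: eq_bigr => f _.
set P := \prod_(k < m.+2) f k; set S := lam _.
rewrite (eq_bigr (fun i => S * (chiF i P * (chiF i x)^*))); last first.
  by move=> i _; rewrite mulrAC mulrC.
rewrite -mulr_sumr chiF_ortho2 //.
by case: eqP => _; rewrite ?mulr1n ?mulr0n ?mulr0 // mulrC.
Qed.

End S.

From mathcomp Require Import ring.

Theorem corollary1 (F : finFieldType) (n : nat) (lam : F -> algC) (x : F)
  (hn : (2 <= n)%N)
  (hchar : additive_character lam) (hnt : nontrivial_character lam)
  (hx : x != 0) :
  `| \sum_(a : {ffun 'I_n.-1 -> F} | [forall i, a i != 0])
       lam (\sum_(i < n.-1) a i + x / \prod_(i < n.-1) a i) |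
  <= (1 - 1 / (#|F|.-1)%:R) * sqrtC (#|F|%:R) ^+ n + 1 / (#|F|.-1)%:R.
Proof.
case: n hn => [|[|k]] // _.
case: hchar => hadd hnz.
set S := \sum_(a | _) _.
have q1 := card_finNzRing_gt1 F.
set q := #|F| in q1 *.
set c : algC := (q.-1)%:R.
have c0 : c != 0 by rewrite pnatr_eq0 -lt0n; case: (q) q1.
have eS : S = c^-1 * \sum_i gs lam i ^+ k.+2 * (chiF i x)^*.
  by rewrite -(kl_ident hadd hnz k hx) mulKf.
set s := sqrtC (q%:R : algC).
have ng i : `|gs lam i| = if i == 0 then 1 else s.
  case: eqP => [->|/eqP i0]; first by rewrite (gs0 hadd hnz hnt) normrN normr1.
  by rewrite normC_def (gs_norm2 hadd hnz hnt i0).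
have hsum : \sum_i `|gs lam i ^+ k.+2 * (chiF i x)^*| = 1 + (c - 1) * s ^+ k.+2.
  under eq_bigr do rewrite normrM norm_conjC chiF_norm // mulr1 normrX ng.
  rewrite (bigD1 0) //= expr1n; congr (_ + _).
  rewrite (eq_bigr (fun _ => s ^+ k.+2)); last by move=> i /negPf ->.
  rewrite sumr_const -mulr_natl; congr (_ * _).
  have := cardD1 (0 : Iirr [set: {unit F}]%G) predT.
  rewrite card_Iirr inE /= /c => ->.
  rewrite natrD addrC addKr; congr (_%:R); apply: eq_card => i; rewrite !inE andbT.
  by [].
rewrite eS normrM normfV normr_nat -/c.
have hc : 0 <= c^-1 by rewrite invr_ge0 ler0n.
apply: le_trans (ler_wpM2l hc (ler_norm_sum _ _ _)) _.
rewrite hsum -/c.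
rewrite le_eqVlt; apply/orP; left; apply/eqP.
field.
exact: c0.
Qed.
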